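(* Let $(P_n)_{n\in\mathbb{Z}}$ be the Padovan sequence. Let $a,b,m$ be integers with $1\le b\le a$, $m\ge 0$, and $n=am+b>a$. Then for every integer $k\ge 0$ there exist integers $c_1,c_2,c_3$ with $$P_n=c_1P_{a(k+2)+b}+c_2P_{a(k+1)+b}+c_3P_{ak+b};$$ in particular $P_n$ is an integer linear combination of $P_{2a+b}$, $P_{a+b}$ and $P_b$.
   Context: The Padovan sequence is defined by $P_0=P_1=P_2=1$ and $P_{n+3}=P_{n+1}+P_n$, extended to negative indices via $P_n=P_{n+3}-P_{n+1}$. The entries $P_b,P_{a+b},P_{2a+b},\dots$ form the $b$th column of the ''$a$ columns Padovan table'' (the array whose rows are $P_{ja+1},\dots,P_{ja+a}$, $j=0,1,2,\dots$). *)

(* Defs.v *)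
From Stdlib Require Import ZArith.
Open Scope Z_scope.

(* One forward step on a window (P_j, P_{j+1}, P_{j+2}) |-> (P_{j+1}, P_{j+2}, P_{j+3}),
   using P_{j+3} = P_{j+1} + P_j. *)
Definition pad_fwd (t : Z * Z * Z) : Z * Z * Z :=
  let '(x, y, z) := t in (y, z, x + y).

(* One backward step (P_j, P_{j+1}, P_{j+2}) |-> (P_{j-1}, P_j, P_{j+1}),
   using P_{j-1} = P_{j+2} - P_j. *)
Definition pad_bwd (t : Z * Z * Z) : Z * Z * Z :=
  let '(x, y, z) := t in (z - x, x, y).

Definition pad_fst (t : Z * Z * Z) : Z := let '(x, _, _) := t in x.

(* The Padovan sequence on all integers: P_0 = P_1 = P_2 = 1,
   P_{n+3} = P_{n+1} + P_n, extended by P_n = P_{n+3} - P_{n+1}. *)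
Definition padovan (n : Z) : Z :=
  if 0 <=? n then pad_fst (Nat.iter (Z.to_nat n) pad_fwd (1, 1, 1))
  else pad_fst (Nat.iter (Z.to_nat (- n)) pad_bwd (1, 1, 1)).

(* Main.v *)
Require Import Defs.
From Stdlib Require Import ZArith Lia.
Open Scope Z_scope.

Definition G (n : Z) : Z * Z * Z :=
  if 0 <=? n then Nat.iter (Z.to_nat n) pad_fwd (1, 1, 1)
  else Nat.iter (Z.to_nat (- n)) pad_bwd (1, 1, 1).

Lemma fwd_bwd t : pad_fwd (pad_bwd t) = t.
Proof. destruct t as [[x y] z]; simpl; f_equal; f_equal; ring. Qed.

Lemma G_succ n : G (n + 1) = pad_fwd (G n).
Proof.
  unfold G. destruct (Z.leb_spec 0 n).
  - rewrite (proj2 (Z.leb_le 0 (n+1))) by lia.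
    replace (Z.to_nat (n+1)) with (S (Z.to_nat n)) by lia. reflexivity.
  - replace (Z.to_nat (- n)) with (S (Z.to_nat (- (n+1)))) by lia.
    simpl Nat.iter. rewrite fwd_bwd.
    destruct (Z.leb_spec 0 (n+1)).
    + assert (n + 1 = 0) by lia. rewrite H1. reflexivity.
    + reflexivity.
Qed.

Lemma pad_G n : padovan n = pad_fst (G n).
Proof. unfold padovan, G. destruct (0 <=? n); reflexivity. Qed.

Lemma G_eq n : G n = (padovan n, padovan (n+1), padovan (n+2)).
Proof.
  rewrite !pad_G. replace (n+2) with (n+1+1) by ring. rewrite !G_succ.
  destruct (G n) as [[x y] z]. reflexivity.
Qed.

Lemma pad_rec n : padovan (n + 3) = padovan (n + 1) + padovan n.
Proof.
  rewrite !pad_G. replace (n+3) with (n+1+1+1) by ring. rewrite !G_succ.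
  destruct (G n) as [[x y] z]. simpl. ring.
Qed.

Record mat := Mat { m11 : Z; m12 : Z; m13 : Z; m21 : Z; m22 : Z; m23 : Z;
                    m31 : Z; m32 : Z; m33 : Z }.
Definition vec := (Z * Z * Z)%type.

Definition mv (A : mat) (v : vec) : vec :=
  let '(x, y, z) := v in
  (m11 A * x + m12 A * y + m13 A * z,
   m21 A * x + m22 A * y + m23 A * z,
   m31 A * x + m32 A * y + m33 A * z).

Definition mm (A B : mat) : mat :=
  Mat (m11 A * m11 B + m12 A * m21 B + m13 A * m31 B)
      (m11 A * m12 B + m12 A * m22 B + m13 A * m32 B)
      (m11 A * m13 B + m12 A * m23 B + m13 A * m33 B)
      (m21 A * m11 B + m22 A * m21 B + m23 A * m31 B)
      (m21 A * m12 B + m22 A * m22 B + m23 A * m32 B)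
      (m21 A * m13 B + m22 A * m23 B + m23 A * m33 B)
      (m31 A * m11 B + m32 A * m21 B + m33 A * m31 B)
      (m31 A * m12 B + m32 A * m22 B + m33 A * m32 B)
      (m31 A * m13 B + m32 A * m23 B + m33 A * m33 B).

Definition det (A : mat) : Z :=
  m11 A * (m22 A * m33 A - m23 A * m32 A)
  - m12 A * (m21 A * m33 A - m23 A * m31 A)
  + m13 A * (m21 A * m32 A - m22 A * m31 A).

Definition tr (A : mat) : Z := m11 A + m22 A + m33 A.
Definition s2 (A : mat) : Z :=
  (m11 A * m22 A - m12 A * m21 A) + (m11 A * m33 A - m13 A * m31 A)
  + (m22 A * m33 A - m23 A * m32 A).

Definition Id3 := Mat 1 0 0 0 1 0 0 0 1.
Definition M0 := Mat 0 1 0 0 0 1 1 1 0.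

Fixpoint mpow (j : nat) : mat :=
  match j with O => Id3 | S j' => mm M0 (mpow j') end.

Lemma mv_mm A B v : mv (mm A B) v = mv A (mv B v).
Proof. destruct A, B; destruct v as [[x y] z]; simpl; (f_equal; [f_equal|]); ring. Qed.

Lemma det_mm A B : det (mm A B) = det A * det B.
Proof. destruct A, B; unfold det; simpl; ring. Qed.

Lemma det_pow j : det (mpow j) = 1.
Proof. induction j; simpl. reflexivity. rewrite det_mm, IHj. reflexivity. Qed.

Definition U (n : Z) : vec := (padovan n, padovan (n+1), padovan (n+2)).

Lemma U_pow (j : nat) n : U (n + Z.of_nat j) = mv (mpow j) (U n).
Proof.
  induction j.
  - unfold U, mpow, mv, Id3; cbn [m11 m12 m13 m21 m22 m23 m31 m32 m33]. rewrite Z.add_0_r. (f_equal; [f_equal|]); ring.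
  - simpl mpow. rewrite mv_mm, <- IHj. unfold U, mv, M0; cbn [m11 m12 m13 m21 m22 m23 m31 m32 m33].
    replace (n + Z.of_nat (S j)) with (n + Z.of_nat j + 1) by lia.
    replace (n + Z.of_nat j + 1 + 1) with (n + Z.of_nat j + 2) by ring.
    replace (n + Z.of_nat j + 1 + 2) with (n + Z.of_nat j + 3) by ring.
    rewrite pad_rec. (f_equal; [f_equal|]); ring.
Qed.

Lemma CH A x y z :
  let '(p, q, r) := mv A (mv A (mv A (x, y, z))) in
  let '(p2, q2, r2) := mv A (mv A (x, y, z)) in
  let '(p1, q1, r1) := mv A (x, y, z) in
  p = tr A * p2 - s2 A * p1 + det A * x.
Proof. destruct A; unfold tr, s2, det; simpl. ring. Qed.

Section Main.
Variables a b k : Z.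
Hypothesis ha : 0 <= a.
Let Q j := padovan (a * j + b).
Let t := tr (mpow (Z.to_nat a)).
Let s := s2 (mpow (Z.to_nat a)).

Lemma Qrec j : Q (j + 3) = t * Q (j + 2) - s * Q (j + 1) + Q j.
Proof.
  unfold Q, t, s. set (A := mpow (Z.to_nat a)).
  assert (HU : forall i, U (a * (i + 1) + b) = mv A (U (a * i + b))).
  { intro i. unfold A. rewrite <- U_pow. f_equal. lia. }
  pose proof (CH A (padovan (a*j+b)) (padovan (a*j+b+1)) (padovan (a*j+b+2))) as H.
  fold (U (a*j+b)) in H.
  rewrite <- !HU in H.
  replace (j + 1 + 1) with (j + 2) in H by ring.
  replace (j + 2 + 1) with (j + 3) in H by ring.
  unfold A in H. rewrite det_pow in H.
  unfold U in H. cbv beta iota zeta in H. unfold A. lia.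
Qed.

Definition InS x := exists c1 c2 c3 : Z, x = c1 * Q (k + 2) + c2 * Q (k + 1) + c3 * Q k.

Lemma InS_comb p q r x y z : InS x -> InS y -> InS z -> InS (p * x + q * y + r * z).
Proof.
  intros [a1 [a2 [a3 Hx]]] [b1 [b2 [b3 Hy]]] [d1 [d2 [d3 Hz]]].
  exists (p*a1+q*b1+r*d1), (p*a2+q*b2+r*d2), (p*a3+q*b3+r*d3).
  subst. ring.
Qed.

Lemma InS_base0 : InS (Q k). Proof. exists 0, 0, 1. ring. Qed.
Lemma InS_base1 : InS (Q (k+1)). Proof. exists 0, 1, 0. ring. Qed.
Lemma InS_base2 : InS (Q (k+2)). Proof. exists 1, 0, 0. ring. Qed.

Lemma InS_fwd (d : nat) :
  InS (Q (k + Z.of_nat d)) /\ InS (Q (k + Z.of_nat d + 1)) /\ InS (Q (k + Z.of_nat d + 2)).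
Proof.
  induction d as [|d [H0 [H1 H2]]].
  - simpl. rewrite Z.add_0_r. split; [|split]; auto using InS_base0, InS_base1, InS_base2.
  - replace (k + Z.of_nat (S d)) with (k + Z.of_nat d + 1) by lia.
    replace (k + Z.of_nat d + 1 + 1) with (k + Z.of_nat d + 2) by ring.
    replace (k + Z.of_nat d + 1 + 2) with (k + Z.of_nat d + 3) by ring.
    split; [|split]; auto.
    rewrite Qrec.
    replace (Q (k + Z.of_nat d)) with (1 * Q (k + Z.of_nat d)) by ring.
    replace (t * Q (k + Z.of_nat d + 2) - s * Q (k + Z.of_nat d + 1) + 1 * Q (k + Z.of_nat d))
      with (t * Q (k + Z.of_nat d + 2) + (- s) * Q (k + Z.of_nat d + 1) + 1 * Q (k + Z.of_nat d)) by ring.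
    apply InS_comb; auto.
Qed.

Lemma InS_bwd (d : nat) :
  InS (Q (k - Z.of_nat d)) /\ InS (Q (k - Z.of_nat d + 1)) /\ InS (Q (k - Z.of_nat d + 2)).
Proof.
  induction d as [|d [H0 [H1 H2]]].
  - simpl. rewrite Z.sub_0_r. split; [|split]; auto using InS_base0, InS_base1, InS_base2.
  - set (j := k - Z.of_nat (S d)).
    assert (E0 : k - Z.of_nat d = j + 1) by (unfold j; lia).
    assert (E1 : k - Z.of_nat d + 1 = j + 2) by (unfold j; lia).
    assert (E2 : k - Z.of_nat d + 2 = j + 3) by (unfold j; lia).
    rewrite E0, E1, E2 in *.
    split; [|split]; auto.
    assert (Hq : Q j = 1 * Q (j + 3) + (- t) * Q (j + 2) + s * Q (j + 1))
      by (rewrite Qrec; ring).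
    rewrite Hq. apply InS_comb; auto.
Qed.

Lemma InS_all m : InS (Q m).
Proof.
  destruct (Z.le_gt_cases k m).
  - destruct (InS_fwd (Z.to_nat (m - k))) as [H0 _].
    replace (k + Z.of_nat (Z.to_nat (m - k))) with m in H0 by lia. exact H0.
  - destruct (InS_bwd (Z.to_nat (k - m))) as [H0 _].
    replace (k - Z.of_nat (Z.to_nat (k - m))) with m in H0 by lia. exact H0.
Qed.
End Main.

Theorem theorem3p4 (a b m n : Z) :
  1 <= b -> b <= a -> 0 <= m -> n = a * m + b -> a < n ->
  forall k : Z, 0 <= k ->
    exists c1 c2 c3 : Z,
      padovan n = c1 * padovan (a * (k + 2) + b) + c2 * padovan (a * (k + 1) + b)
                  + c3 * padovan (a * k + b).
Proof.
  intros Hb Hba Hm Hn Han k Hk. subst n.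
  exact (InS_all a b k ltac:(lia) m).
Qed.
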